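(* Let $\varepsilon>0$ and let $(G,\mathcal P,\mathcal I,k)$ be an instance of $\mathrm{BAL}(\mu,\nu)$ with $k\ge2\nu/\varepsilon$. Let $(G',\mathcal P,\mathcal I',k)$ be the transformed instance obtained by adding a new isolated node $v$ to $G$ and adding $v$ to $I_i$ for every $i\in[\nu]$. Let $\Phi'$ be the objective of the transformed instance and $\mathcal S'$ a solution of it with $\Phi'(\mathcal S')\ge\alpha\,\Phi'(\mathcal S'^* )$, where $\mathcal S'^*$ is an optimal solution for maximizing $\Phi'$. Then $\mathcal S=\mathcal S'\setminus\{v\}$ (removing $v$ from every set) satisfies $\Phi(\mathcal S)\ge(\alpha-\varepsilon)\Phi(\mathcal S^* )$, where $\mathcal S^*$ is an optimal solution for maximizing $\Phi$ in the original instance.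
   Context: Triggering model: for a directed graph $G=(V,E)$ and $p:E\to[0,1]$, an outcome $X=(T_v)_{v\in V}$ is obtained by having each node $v$ independently choose a subset $T_v$ of its in-neighbours $N_v$, with $T_v=S$ with probability $\prod_{u\in S}p_{uv}\prod_{u\in N_v\setminus S}(1-p_{uv})$; $\rho_X(A)$ is the set of nodes reachable from $A\subseteq V$ via arcs $\{(u,v):u\in T_v\}$. $\mathrm{BAL}(\mu,\nu)$ for integer constants $\mu\ge\nu\ge2$: instance = directed graph $G=(V,E)$, probability functions $\mathcal P=(p_1,\dots,p_\mu)$ on $E$, seed sets $\mathcal I=(I_1,\dots,I_\mu)$, budget $k\ge2$; standing assumptions $\nu\le k\le\nu|V|$, $|V|\ge\mu$. A solution is $\mathcal S=(S_1,\dots,S_\mu)$, $S_i\subseteq V$, $\sum_i|S_i|\le k$. An outcome profile $(X_1,\dots,X_\mu)$ consists of outcomes $X_i$ w.r.t. $p_i$ (independent in the heterogeneous setting; identical in the correlated setting). $\Phi(\mathcal S)$ is the expected number of nodes lying in none or in at least $\nu$ of the sets $\rho_{X_i}(I_i\cup S_i)$. *)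

(* Defs.v *)
From HB Require Import structures.
From mathcomp Require Import all_boot all_order all_algebra.
Set Implicit Arguments. Unset Strict Implicit. Unset Printing Implicit Defensive.
Import Order.TTheory GRing.Theory Num.Theory.
Local Open Scope ring_scope.

(* A directed graph is a relation E : rel V on a finite type V (arc u -> v iff E u v).
   A probability function on E is p : V -> V -> R, only its values on arcs matter. *)

Definition inN (V : finType) (E : rel V) (v : V) : {set V} := [set u | E u v].

(* An outcome X = (T_v)_v is a finite function V -> {set V};
   its probability w.r.t. p (0 unless T_v is a subset of N_v). *)
Definition outcome_prob (R : ringType) (V : finType) (E : rel V) (p : V -> V -> R)
  (X : {ffun V -> {set V}}) : R :=
  \prod_(v : V)
    (if X v \subset inN E v then
       \prod_(u in inN E v) (if u \in X v then p u v else 1 - p u v)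
     else 0).

Definition reach (V : finType) (X : {ffun V -> {set V}}) (A : {set V}) : {set V} :=
  [set w | [exists a in A, connect (fun x y => x \in X y) a w]].

Definition balanced_count (V : finType) (mu nu : nat)
  (Xs : 'I_mu -> {ffun V -> {set V}}) (I S : 'I_mu -> {set V}) : nat :=
  #|[set w : V | let c := #|[set i : 'I_mu | w \in reach (Xs i) (I i :|: S i)]| in
                 (c == 0)%N || (nu <= c)%N]|.

Inductive setting := Heterogeneous | Correlated.

(* p_1, the first probability function (dummy if mu = 0) *)
Definition p_first (R : ringType) (V : finType) (mu : nat) : ('I_mu -> V -> V -> R) -> V -> V -> R :=
  match mu return ('I_mu -> V -> V -> R) -> V -> V -> R with
  | 0 => fun _ _ _ => 0
  | m.+1 => fun P => P ord0
  end.

(* The objective Phi(S) = expected balanced count.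
   Heterogeneous: independent outcomes X_i w.r.t. p_i.
   Correlated: one common outcome X (w.r.t. the common probability function p_1). *)
Definition Phi (R : ringType) (V : finType) (E : rel V) (mu nu : nat) (s : setting)
  (P : 'I_mu -> V -> V -> R) (I S : 'I_mu -> {set V}) : R :=
  match s with
  | Heterogeneous =>
      \sum_(Xs : {ffun 'I_mu -> {ffun V -> {set V}}})
         (\prod_(i : 'I_mu) outcome_prob E (P i) (Xs i)) * (balanced_count nu Xs I S)%:R
  | Correlated =>
      \sum_(X : {ffun V -> {set V}})
         outcome_prob E (p_first P) X * (balanced_count nu (fun _ => X) I S)%:R
  end.

Definition feasible (V : finType) (mu k : nat) (S : 'I_mu -> {set V}) : bool :=
  (\sum_(i : 'I_mu) #|S i| <= k)%N.

(* The transformed instance: V' = option V, the new isolated node v is None. *)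
Definition ext_rel (V : finType) (E : rel V) : rel (option V) :=
  fun a b => match a, b with Some x, Some y => E x y | _, _ => false end.

Definition ext_prob (R : ringType) (V : finType) (mu : nat) (P : 'I_mu -> V -> V -> R)
  : 'I_mu -> option V -> option V -> R :=
  fun i a b => match a, b with Some x, Some y => P i x y | _, _ => 0 end.

(* I'_i = I_i U {v} for i in [nu] (i.e. 0-based index i < nu), I'_i = I_i otherwise *)
Definition ext_seeds (V : finType) (mu nu : nat) (I : 'I_mu -> {set V})
  : 'I_mu -> {set option V} :=
  fun i => (if (i < nu)%N then [set None] else set0) :|: (Some @: I i).

Definition remove_new (V : finType) (mu : nat) (S' : 'I_mu -> {set option V})
  : 'I_mu -> {set V} :=
  fun i => [set x | Some x \in S' i].

(* Main.v *)
Require Import Defs.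
From HB Require Import structures.
From mathcomp Require Import all_boot all_order all_algebra.
From mathcomp Require Import ring lra zify.
From Stdlib Require Import FunctionalExtensionality.
Import Order.TTheory GRing.Theory Num.Theory.
Set Implicit Arguments. Unset Strict Implicit. Unset Printing Implicit Defensive.
Local Open Scope ring_scope.

Lemma big_option_gen (R' : Type) (idx : R') (op : Monoid.com_law idx) (V : finType)
  (F : option V -> R') :
  \big[op/idx]_(o : option V) F o = op (F None) (\big[op/idx]_(v : V) F (Some v)).
Proof.
rewrite (bigD1 None) //=; congr (op _ _).
rewrite (reindex_omap Some id) /=; last by case.
by apply: eq_bigl => v; rewrite eqxx.
Qed.

Definition liftX (V : finType) (X : {ffun V -> {set V}}) : {ffun option V -> {set option V}} :=
  [ffun o => if o is Some v then Some @: X v else set0].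
Definition unliftX (V : finType) (X' : {ffun option V -> {set option V}}) : {ffun V -> {set V}} :=
  [ffun v => [set u | Some u \in X' (Some v)]].

Lemma None_imset (V : finType) (A : {set V}) : (None \in Some @: A) = false.
Proof. by apply/imsetP => -[]. Qed.

Lemma liftX_inj (V : finType) : injective (@liftX V).
Proof.
move=> X Y H; apply/ffunP => v; have := congr1 (fun f : {ffun option V -> {set option V}} => f (Some v)) H.
rewrite !ffunE => H'; apply/setP => u.
by rewrite -(mem_imset (X v) u (@Some_inj _)) H' mem_imset //; apply: Some_inj.
Qed.

Lemma inN_None (V : finType) (E : rel V) : inN (ext_rel E) None = set0.
Proof. by apply/setP => u; rewrite !inE; case: u. Qed.

Lemma inN_Some (V : finType) (E : rel V) v : inN (ext_rel E) (Some v) = Some @: inN E v.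
Proof.
apply/setP => -[u|]; last by rewrite None_imset inE.
by rewrite mem_imset; [rewrite !inE | apply: Some_inj].
Qed.

Lemma outcome_zero (R : comNzRingType) (V : finType) (E : rel V) (p' : option V -> option V -> R)
  (X' : {ffun option V -> {set option V}}) :
  X' != liftX (unliftX X') -> outcome_prob (ext_rel E) p' X' = 0.
Proof.
move=> H.
case: (pickP (fun v' => X' v' != liftX (unliftX X') v')) => [v' Hv'|Hall]; last first.
  exfalso; move/eqP: H; apply; apply/ffunP => v'; by move/negbFE/eqP: (Hall v').
rewrite /outcome_prob (bigD1 v') //=.
case: ifP => Hsub; last by rewrite mul0r.
exfalso; move/negP: Hv'; apply; apply/eqP.
case: v' Hsub => [v|] Hsub; rewrite ffunE.
  apply/setP => -[u|].
    by rewrite mem_imset ?ffunE ?inE //; apply: Some_inj.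
  rewrite None_imset; apply/negP => Hn.
  by move/subsetP: Hsub => /(_ _ Hn); rewrite inE.
by apply/eqP; rewrite -subset0 -(inN_None E).
Qed.

Lemma outcome_lift (R : comNzRingType) (V : finType) (E : rel V) (p : V -> V -> R)
  (p' : option V -> option V -> R) (X : {ffun V -> {set V}}) :
  (forall x y, p' (Some x) (Some y) = p x y) ->
  outcome_prob (ext_rel E) p' (liftX X) = outcome_prob E p X.
Proof.
move=> Hp; rewrite /outcome_prob big_option_gen /= ffunE sub0set.
rewrite big_pred0; last by move=> u; rewrite inN_None inE.
rewrite mul1r; apply: eq_bigr => v _; rewrite ffunE inN_Some.
have -> : (Some @: X v \subset Some @: inN E v) = (X v \subset inN E v).
  apply/subsetP/subsetP => H.
    by move=> u Hu; rewrite -(mem_imset _ _ (@Some_inj _)) H // mem_imset //; apply: Some_inj.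
  by move=> x /imsetP[u Hu ->]; rewrite mem_imset //; [apply: H | apply: Some_inj].
case: ifP => // _.
rewrite big_imset /=; last by move=> ? ? _ _ [].
apply: eq_bigr => u _; rewrite mem_imset ?Hp //; apply: Some_inj.
Qed.

Lemma connect_lift (V : finType) (X : {ffun V -> {set V}}) (x y : option V) :
  connect (fun a b => a \in liftX X b) x y =
  match x, y with
  | None, None => true
  | Some a, Some w => connect (fun a b => a \in X b) a w
  | _, _ => false
  end.
Proof.
apply/idP/idP.
  case/connectP => p Hp ->; elim: p x Hp => [|z p IH] x /=.
    by case: x => // a; apply: connect0.
  case/andP => Hxz /IH; rewrite ffunE in Hxz.
  case: z Hxz => [w|]; last by rewrite inE.
  case/imsetP => u Hu -> ; case: (last (Some w) p) => // t Hwt.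
  apply: connect_trans Hwt; exact: connect1.
case: x => [a|]; case: y => [w|] //=; rewrite ?connect0 //.
case/connectP => p Hp ->; elim: p a Hp => [|z p IH] a /=; first by move=> _; apply: connect0.
case/andP => Haz /IH H; apply: connect_trans H; apply: connect1.
by rewrite ffunE mem_imset //; apply: Some_inj.
Qed.

Lemma reach_Some (V : finType) (X : {ffun V -> {set V}}) (A' : {set option V}) w :
  (Some w \in reach (liftX X) A') = (w \in reach X [set a | Some a \in A']).
Proof.
rewrite !inE; apply/existsP/existsP => -[a].
  case: a => [a|] /andP[Ha Hc]; rewrite connect_lift in Hc => //.
  by exists a; rewrite inE Ha.
rewrite inE => /andP[Ha Hc]; exists (Some a); by rewrite Ha connect_lift.
Qed.

Lemma reach_self (V : finType) (X : {ffun V -> {set V}}) (A : {set V}) a :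
  a \in A -> a \in reach X A.
Proof. by move=> Ha; rewrite inE; apply/existsP; exists a; rewrite Ha connect0. Qed.

Lemma card_opt (V : finType) (Q : pred (option V)) :
  #|[set w | Q w]| = (Q None + #|[set w | Q (Some w)]|)%N.
Proof.
rewrite !cardsE -!sum1_card !big_mkcond big_option_gen /=.
rewrite [in RHS]big_mkcond /= !unfold_in /=; by case: (Q None).
Qed.

Lemma card_lt (n m : nat) : (m <= n)%N -> #|[set i : 'I_n | (i < m)%N]| = m.
Proof.
move=> Hmn.
have -> : [set i : 'I_n | (i < m)%N] = [set widen_ord Hmn j | j in 'I_m].
  apply/setP => i; rewrite inE; apply/idP/imsetP.
    by move=> Hi; exists (Ordinal Hi) => //; apply: val_inj.
  by case=> j _ ->; rewrite /= ltn_ord.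
by rewrite card_imset ?card_ord //; by move=> x y /(congr1 val) /= /val_inj.
Qed.

Lemma seeds_unlift (V : finType) (mu nu : nat) (I : 'I_mu -> {set V})
  (S' : 'I_mu -> {set option V}) i :
  [set a | Some a \in ext_seeds nu I i :|: S' i] = I i :|: remove_new S' i.
Proof.
apply/setP => a; rewrite !inE mem_imset; last by apply: Some_inj.
by case: (i < nu)%N; rewrite !inE.
Qed.

Lemma bc_lift (V : finType) (mu nu : nat) (Xs : 'I_mu -> {ffun V -> {set V}})
  (I : 'I_mu -> {set V}) (S' : 'I_mu -> {set option V}) :
  (nu <= mu)%N ->
  balanced_count nu (fun i => liftX (Xs i)) (ext_seeds nu I) S' =
  (balanced_count nu Xs I (remove_new S')).+1.
Proof.
move=> Hnm; rewrite /balanced_count card_opt /=.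
have Hn : (nu <= #|[set i | None \in reach (liftX (Xs i)) (ext_seeds nu I i :|: S' i)]|)%N.
  rewrite -{1}(card_lt Hnm); apply: subset_leq_card.
  apply/subsetP => i; rewrite in_set => Hi; rewrite in_set; apply: reach_self.
  by rewrite /ext_seeds Hi !inE eqxx.
rewrite Hn orbT add1n; congr (_.+1); apply: eq_card => w; rewrite !inE.
have -> : [set i | Some w \in reach (liftX (Xs i)) (ext_seeds nu I i :|: S' i)] =
          [set i | w \in reach (Xs i) (I i :|: remove_new S' i)].
  by apply/setP => i; rewrite [LHS]in_set [RHS]in_set reach_Some seeds_unlift.
by [].
Qed.

Lemma sum_lift (R : nzRingType) (A B : finType) (h : A -> B) (F : B -> R) :
  injective h -> (forall b, F b != 0 -> exists a, b = h a) ->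
  \sum_b F b = \sum_a F (h a).
Proof.
move=> Hinj HF.
rewrite (bigID (mem (h @: setT))) /= [X in _ + X]big1 ?addr0; last first.
  move=> b Hb; apply/eqP; apply/negPn/negP => /HF [a Ha].
  by move: Hb; rewrite Ha imset_f ?inE.
rewrite big_imset /=; last by move=> x y _ _; apply: Hinj.
by apply: eq_bigl => a; rewrite inE.
Qed.

Definition Ex (R : nzRingType) (V : finType) (E : rel V) (mu : nat) (s : setting)
  (P : 'I_mu -> V -> V -> R) (f : ('I_mu -> {ffun V -> {set V}}) -> R) : R :=
  match s with
  | Heterogeneous =>
      \sum_(Xs : {ffun 'I_mu -> {ffun V -> {set V}}})
         (\prod_(i : 'I_mu) outcome_prob E (P i) (Xs i)) * f Xs
  | Correlated =>
      \sum_(X : {ffun V -> {set V}}) outcome_prob E (p_first P) X * f (fun _ => X)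
  end.

Lemma Phi_Ex (R : nzRingType) (V : finType) (E : rel V) (mu nu : nat) (s : setting)
  (P : 'I_mu -> V -> V -> R) I S :
  Phi E nu s P I S = Ex E s P (fun Xs => (balanced_count nu Xs I S)%:R).
Proof. by case: s. Qed.

Lemma p_first_ext (R : nzRingType) (V : finType) (mu : nat) (P : 'I_mu -> V -> V -> R) x y :
  p_first (ext_prob P) (Some x) (Some y) = p_first P x y.
Proof. by case: mu P. Qed.

Lemma Ex_lift (R : comNzRingType) (V : finType) (E : rel V) (mu : nat) (s : setting)
  (P : 'I_mu -> V -> V -> R) (f : ('I_mu -> {ffun option V -> {set option V}}) -> R) :
  Ex (ext_rel E) s (ext_prob P) f = Ex E s P (fun Xs => f (fun i => liftX (Xs i))).
Proof.
case: s => /=.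
  pose h := fun Xs : {ffun 'I_mu -> {ffun V -> {set V}}} => [ffun i => liftX (Xs i)].
  rewrite (@sum_lift _ _ _ h).
  - apply: eq_bigr => Xs _; congr (_ * _).
      by apply: eq_bigr => i _; rewrite ffunE (@outcome_lift _ _ _ (P i)).
    by congr f; apply: functional_extensionality => i; rewrite ffunE.
  - move=> X Y; rewrite /h => /ffunP H; apply/ffunP => i.
    by apply: liftX_inj; have := H i; rewrite !ffunE.
  - move=> Xs' HF; exists [ffun i => unliftX (Xs' i)]; apply/ffunP => i.
    rewrite !ffunE; apply/eqP; apply/negPn/negP => Hi.
    move: HF; rewrite (bigD1 i) //= outcome_zero // mul0r mul0r.
    by rewrite eqxx.
rewrite (@sum_lift _ _ _ (@liftX V)).
- apply: eq_bigr => X _; congr (_ * _).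
  by apply: outcome_lift => x y; rewrite p_first_ext.
- exact: liftX_inj.
- move=> X' HF; exists (unliftX X'); apply/eqP; apply/negPn/negP => Hi.
  by move: HF; rewrite outcome_zero // mul0r eqxx.
Qed.

Lemma outcome_ge0 (R : realFieldType) (V : finType) (E : rel V) (p : V -> V -> R) X :
  (forall u v, E u v -> 0 <= p u v <= 1) -> 0 <= outcome_prob E p X.
Proof.
move=> Hp; apply: prodr_ge0 => v _; case: ifP => _ //.
apply: prodr_ge0 => u; rewrite inE => Huv.
have /andP[h0 h1] := Hp _ _ Huv; case: ifP => _ //; by rewrite subr_ge0.
Qed.

Lemma p_first_bd (R : realFieldType) (V : finType) (E : rel V) (mu : nat)
  (P : 'I_mu -> V -> V -> R) :
  (forall (i : 'I_mu) (u v : V), E u v -> 0 <= P i u v <= 1) ->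
  forall u v, E u v -> 0 <= p_first P u v <= 1.
Proof. by case: mu P => [|m] P HP u v Huv //=; [rewrite lexx ler01 | apply: HP]. Qed.

Lemma Ex_mono (R : realFieldType) (V : finType) (E : rel V) (mu : nat) (s : setting)
  (P : 'I_mu -> V -> V -> R) f g :
  (forall (i : 'I_mu) (u v : V), E u v -> 0 <= P i u v <= 1) ->
  (forall Xs, f Xs <= g Xs) -> Ex E s P f <= Ex E s P g.
Proof.
move=> HP Hfg; case: s => /=; apply: ler_sum => X _; apply: ler_wpM2l => //.
  by apply: prodr_ge0 => i _; apply: outcome_ge0 => u v; apply: HP.
by apply: outcome_ge0; apply: p_first_bd.
Qed.

Lemma Ex_add (R : realFieldType) (V : finType) (E : rel V) (mu : nat) (s : setting)
  (P : 'I_mu -> V -> V -> R) f g :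
  Ex E s P (fun Xs => f Xs + g Xs) = Ex E s P f + Ex E s P g.
Proof. by case: s => /=; rewrite -big_split /=; apply: eq_bigr => X _; rewrite mulrDr. Qed.

Lemma Ex_const (R : realFieldType) (V : finType) (E : rel V) (mu : nat) (s : setting)
  (P : 'I_mu -> V -> V -> R) c :
  Ex E s P (fun _ => c) = c * Ex E s P (fun _ => 1).
Proof. by case: s => /=; rewrite mulr_sumr; apply: eq_bigr => X _; rewrite mulr1 mulrC. Qed.

Lemma Phi_ext (R : realFieldType) (V : finType) (E : rel V) (mu nu : nat) (s : setting)
  (P : 'I_mu -> V -> V -> R) (I : 'I_mu -> {set V}) (T : 'I_mu -> {set option V}) :
  (nu <= mu)%N ->
  Phi (ext_rel E) nu s (ext_prob P) (ext_seeds nu I) T =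
  Phi E nu s P I (remove_new T) + Ex E s P (fun _ => 1).
Proof.
move=> Hnm; rewrite !Phi_Ex Ex_lift -Ex_add; congr (Ex _ _ _ _).
apply: functional_extensionality => Xs; by rewrite bc_lift // -addn1 natrD.
Qed.

Theorem mainTheorem14 (R : realFieldType) (V : finType) (E : rel V) (mu nu : nat)
  (s : setting) (P : 'I_mu -> V -> V -> R) (I : 'I_mu -> {set V}) (k : nat)
  (eps alpha : R) (S' Sopt' : 'I_mu -> {set option V}) (Sopt : 'I_mu -> {set V}) :
  (2 <= nu)%N -> (nu <= mu)%N -> (2 <= k)%N -> (nu <= k)%N -> (k <= nu * #|V|)%N ->
  (mu <= #|V|)%N ->
  (forall (i : 'I_mu) (u v : V), E u v -> 0 <= P i u v <= 1) ->
  (s = Correlated -> forall i j : 'I_mu, P i = P j) ->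
  0 < eps -> 2 * nu%:R / eps <= k%:R ->
  (* S'* : an optimal solution of the transformed instance *)
  feasible k Sopt' ->
  (forall T : 'I_mu -> {set option V}, feasible k T ->
     Phi (ext_rel E) nu s (ext_prob P) (ext_seeds nu I) T
     <= Phi (ext_rel E) nu s (ext_prob P) (ext_seeds nu I) Sopt') ->
  (* S' : an alpha-approximate solution of the transformed instance *)
  feasible k S' ->
  alpha * Phi (ext_rel E) nu s (ext_prob P) (ext_seeds nu I) Sopt'
    <= Phi (ext_rel E) nu s (ext_prob P) (ext_seeds nu I) S' ->
  (* S* : an optimal solution of the original instance *)
  feasible k Sopt ->
  (forall T : 'I_mu -> {set V}, feasible k T -> Phi E nu s P I T <= Phi E nu s P I Sopt) ->
  (alpha - eps) * Phi E nu s P I Sopt <= Phi E nu s P I (remove_new S').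
Proof.
move=> Hnu Hnm Hk Hnk HkV HmV HP _ Heps Hke _ Hopt' _ Happ HSopt Hopt.
set M := Ex E s P (fun _ => 1).
have HM : 0 <= M.
  have := @Ex_mono _ _ E _ s P (fun _ => 0) (fun _ => 1) HP (fun _ => ler01).
  by rewrite Ex_const mul0r.
have Hge0 : forall T, 0 <= Phi E nu s P I T.
  move=> T; rewrite Phi_Ex.
  have := @Ex_mono _ _ E _ s P (fun _ => 0) (fun Xs => (balanced_count nu Xs I T)%:R) HP (fun _ => ler0n _ _).
  by rewrite Ex_const mul0r.
rewrite !Phi_ext // in Happ.
set a := Phi E nu s P I (remove_new S') in Happ *.
set b := Phi E nu s P I Sopt.
have H2 : b + M <= Phi (ext_rel E) nu s (ext_prob P) (ext_seeds nu I) Sopt'.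
  have := Hopt' (fun i => Some @: Sopt i).
  rewrite Phi_ext //.
  have -> : remove_new (fun i => Some @: Sopt i) = Sopt.
    apply: functional_extensionality => i; apply/setP => x.
    by rewrite inE mem_imset //; apply: Some_inj.
  apply; rewrite /feasible.
  rewrite (eq_bigr (fun i => #|Sopt i|)) //.
  by move=> i _; rewrite card_imset //; apply: Some_inj.
set m := (k %/ nu)%N.
have Hm1 : (k <= 2 * m * nu)%N.
  have Hn0 : (0 < nu)%N by lia.
  rewrite /m; have := divn_eq k nu; have := ltn_pmod k Hn0.
  have : (0 < k %/ nu)%N by rewrite divn_gt0.
  move: (k %/ nu)%N (k %% nu)%N => q r Hq Hr Hkk.
  nia.
have HmVm : (m <= #|V|)%N.
  have Hn0 : (0 < nu)%N by lia.
  by apply: leq_trans (leq_div2r nu HkV) _; rewrite mulKn.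
pose W : {set V} := [set enum_val i | i in [set i : 'I_#|V| | (i < m)%N]].
have HW : #|W| = m by rewrite card_imset ?card_lt //; apply: enum_val_inj.
pose T0 := fun i : 'I_mu => if (i < nu)%N then W else set0.
have HT0 : feasible k T0.
  rewrite /feasible /T0.
  rewrite (eq_bigr (fun i : 'I_mu => if (i < nu)%N then m else 0%N)); last first.
    by move=> i _; case: ifP => _; [exact: HW | exact: cards0].
  rewrite -big_mkcond sum_nat_const /=.
  have -> : #|[pred i : 'I_mu | (i < nu)%N]| = nu.
    by have := card_lt Hnm; rewrite cardsE.
  by rewrite mulnC leq_divM.
have H3 : m%:R * M <= b.
  apply: le_trans (Hopt _ HT0); rewrite Phi_Ex -Ex_const.
  apply: Ex_mono => // Xs; rewrite ler_nat -HW; apply: subset_leq_card.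
  apply/subsetP => w Hw; rewrite in_set; apply/orP; right.
  rewrite -{1}(card_lt Hnm); apply: subset_leq_card.
  apply/subsetP => i; rewrite in_set => Hi; rewrite in_set; apply: reach_self.
  by rewrite /T0 Hi !inE Hw orbT.
have Hm : 1 <= eps * m%:R.
  have Hk' : k%:R <= 2 * m%:R * nu%:R :> R by rewrite -!natrM ler_nat.
  have Hnu0 : 0 < nu%:R :> R by rewrite ltr0n; lia.
  rewrite ler_pdivrMr // in Hke.
  nra.
have Ha : 0 <= a by apply: Hge0.
have Hb : 0 <= b by apply: Hge0.
case: (lerP alpha eps) => Hae.
  by apply: le_trans Ha; rewrite mulr_le0_ge0 // subr_le0.
have Hal : 0 <= alpha by apply: le_trans (ltW Hae); apply: ltW.
have H4 : alpha * (b + M) <= a + M.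
  rewrite Phi_ext // in H2; exact: le_trans (ler_wpM2l Hal H2) Happ.
have H5 : eps * (m%:R * M) <= eps * b by apply: ler_wpM2l => //; apply: ltW.
have H6 : M <= eps * m%:R * M by rewrite -{1}(mul1r M); apply: ler_wpM2r.
nra.
Qed.
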